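(* Let $K$ be a pathwise connected poset. (i) $(\Lambda,\lambda)_K$ is a net bundle of discrete groups and $(\Lambda^l,\lambda)_K$ is a net of discrete groups, and the inclusions $i_o:\Lambda^l_o\to\Lambda_o$ define a monomorphism $i:(\Lambda^l,\lambda)_K\to(\Lambda,\lambda)_K$. (ii) If $K$ has a symmetry group $G$, then, with the actions $g_*$, both nets are $G$-covariant and $i$ is a monomorphism of $G$-covariant nets.
   Context: Simplices and paths. For a poset $K$: $0$-simplices are elements of $K$; an $n$-simplex $x$ ($n\ge1$) consists of $(n-1)$-simplices $\partial_0x,\dots,\partial_nx$ and a support $|x|\in K$ with $|\partial_ix|\le|x|$. The opposite $\overline b$ of a $1$-simplex $b$ has the same support and swapped faces. $\iota_a$ is the degenerate $1$-simplex at $a$ (faces and support $a$). For $a\le o$, $(oa)$ is the $1$-simplex with $\partial_1=a$, $\partial_0=o$, support $o$. A path $p=b_n*\cdots*b_1$ is a concatenation of $1$-simplices with $\partial_0b_i=\partial_1b_{i+1}$; its support $|p|$ is the set of supports of the $b_i$; the opposite path is $\overline p=\overline{b_1}*\cdots*\overline{b_n}$. $K$ is pathwise connected if any two elements are joined by a path. $w$-equivalence: two paths with the same endpoints are $w$-equivalent if one is obtained from the other by finitely many of the following moves or their inverses: (1) inserting a degenerate $1$-simplex $\iota_a$; (2) replacing $(oa)*(ae)$ by $(oe)$ for $e\le a\le o$; (3) replacing $\overline b*b$ by $\iota_{\partial_1b}$. Write $[p]_w$ for the class. Groups of loops: $\Lambda_o$ is the set of $w$-classes of loops over $o$ with product $[p]_w[q]_w=[p*q]_w$;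 $\Lambda^l_o\subseteq\Lambda_o$ consists of classes containing some path whose support is contained in $o$ (i.e. all supports $\le o$). For $o\le a$, $\lambda_{ao}([p]_w):=[(ao)*p*\overline{(ao)}]_w$. Nets of groups: a net of discrete groups $(\mathcal G,\jmath)_K$ assigns groups $\mathcal G_o$ and injective homomorphisms $\jmath_{ao}:\mathcal G_o\to\mathcal G_a$ ($o\le a$) with $\jmath_{eo}=\jmath_{ea}\circ\jmath_{ao}$; a net bundle if all $\jmath_{ao}$ are isomorphisms; a monomorphism (over $\mathrm{id}_K$) is a family of injective homomorphisms commuting with the inclusions. Symmetry: a symmetry group $G$ of $K$ is a group acting on $K$ by order automorphisms (injectively into $\mathrm{Aut}(K)$); it acts on simplices by $gx$ with faces $g\partial_ix$ and support $g|x|$, and on paths simplexwise; $g_*([p]_w):=[gp]_w$. A net is $G$-covariant if there are isomorphisms $\alpha^g_o:\mathcal G_o\to\mathcal G_{go}$ with $\alpha^h_{go}\circ\alpha^g_o=\alpha^{hg}_o$ and $\alpha^g_o\circ\jmath_{oa}=\jmath_{go\,ga}\circ\alpha^g_a$; a morphism $\phi$ of $G$-covariant nets satisfies $\beta^g_o\circ\phi_o=\phi_{go}\circ\alpha^g_o$. *)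

(* Defs.v *)
From Stdlib Require Import Relations ClassicalEpsilon.
From HB Require Import structures.
From mathcomp Require Import all_boot all_order.
Set Implicit Arguments. Unset Strict Implicit. Unset Printing Implicit Defensive.
Import Order.Theory.
Local Open Scope order_scope.

Definition is_group (G : Type) (mul : G -> G -> G) (one : G) (inv : G -> G) : Prop :=
  [/\ (forall x y z, mul x (mul y z) = mul (mul x y) z),
      (forall x, mul one x = x), (forall x, mul x one = x),
      (forall x, mul (inv x) x = one) & (forall x, mul x (inv x) = one)].

Definition is_hom (G H : Type) (mulG : G -> G -> G) (mulH : H -> H -> H) (f : G -> H) :=
  forall x y, f (mulG x y) = mulH (f x) (f y).

Section Poset.
Variables (d : Order.disp_t) (K : porderType d).

Record simplex1 := Simplex1 {
  face0 : K; face1 : K; supp : K;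
  face0_le : face0 <= supp; face1_le : face1 <= supp }.

Definition opp1 (b : simplex1) : simplex1 := Simplex1 (face1_le b) (face0_le b).

Definition iota1 (a : K) : simplex1 := @Simplex1 a a a (lexx a) (lexx a).

Definition edge (o a : K) (H : a <= o) : simplex1 := @Simplex1 o a o (lexx o) H.

(* A path b_n * ... * b_1 is represented by the list [:: b_1; ...; b_n]
   in traversal order (b_1 is traversed first).  It must be non-empty
   and satisfy d0 b_i = d1 b_(i+1). *)
Fixpoint chain (b : simplex1) (p : seq simplex1) : Prop :=
  if p is c :: p' then face0 b = face1 c /\ chain c p' else True.

Definition is_path (p : seq simplex1) : Prop :=
  if p is b :: p' then chain b p' else False.

Definition pstart (a : K) (p : seq simplex1) : Prop :=
  if p is b :: _ then face1 b = a else False.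
Definition pend (e : K) (p : seq simplex1) : Prop :=
  if p is b :: p' then face0 (last b p') = e else False.

Definition path_from_to (a e : K) (p : seq simplex1) : Prop :=
  [/\ is_path p, pstart a p & pend e p].

Definition is_loop (o : K) (p : seq simplex1) : Prop := path_from_to o o p.

(* the product p * q (first q, then p) *)
Definition pcat (p q : seq simplex1) : seq simplex1 := q ++ p.

Definition popp (p : seq simplex1) : seq simplex1 := rev (map opp1 p).

Definition supp_in (p : seq simplex1) (o : K) : bool := all (fun b => supp b <= o) p.

Definition pathwise_connected : Prop :=
  forall a e : K, exists p, path_from_to a e p.

Inductive wmove : seq simplex1 -> seq simplex1 -> Prop :=
| wm_iota (a : K) : wmove [::] [:: iota1 a]
| wm_comp (o a e : K) (Hea : e <= a) (Hao : a <= o) (Heo : e <= o) :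
    wmove [:: edge Hea; edge Hao] [:: edge Heo]
| wm_opp (b : simplex1) : wmove [:: b; opp1 b] [:: iota1 (face1 b)].

Definition wstep (p q : seq simplex1) : Prop :=
  [/\ is_path p, is_path q &
      exists l1 l2 x y, wmove x y /\ p = l1 ++ x ++ l2 /\ q = l1 ++ y ++ l2].

Definition wequiv : relation (seq simplex1) := clos_refl_sym_trans _ wstep.

Lemma path_single (b : simplex1) : path_from_to (face1 b) (face0 b) [:: b].
Proof. by []. Qed.

Lemma path_cons2 a e b c p :
  path_from_to a e [:: b, c & p] -> a = face1 b /\ path_from_to (face0 b) e (c :: p).
Proof. by case=> /= [[H1 H2] H3 H4]; split=> //; split. Qed.

Lemma path_cat a m e p q :
  path_from_to a m p -> path_from_to m e q -> path_from_to a e (p ++ q).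
Proof.
elim: p a => [|b p IH] a; first by case.
case: p IH => [|c p] IH.
  case=> _ /= <- <-; clear IH; case: q => [|c q]; first by case.
  by case=> /= Hc Hs He; split.
move=> /path_cons2 [-> Hp] Hq; have [/= H1 H2 H3] := IH _ Hp Hq.
by split.
Qed.

Lemma path_opp a e p : path_from_to a e p -> path_from_to e a (popp p).
Proof.
elim: p a => [|b p IH] a; first by case.
case: p IH => [|c p] IH.
  by case=> _ /= <- <-; split.
move=> /path_cons2 [-> Hp].
rewrite /popp map_cons rev_cons -cats1.
exact: (path_cat (IH _ Hp) (path_single (opp1 b))).
Qed.

Lemma loop_iota (o : K) : is_loop o [:: iota1 o].
Proof. by []. Qed.

Lemma loop_cat o p q : is_loop o p -> is_loop o q -> is_loop o (pcat p q).
Proof. by move=> Hp Hq; exact: path_cat Hq Hp. Qed.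

Lemma loop_opp o p : is_loop o p -> is_loop o (popp p).
Proof. exact: path_opp. Qed.

Definition conjp (o a : K) (H : o <= a) (p : seq simplex1) : seq simplex1 :=
  pcat (pcat [:: edge H] p) (popp [:: edge H]).

Lemma loop_conjp o a (H : o <= a) p : is_loop o p -> is_loop a (conjp H p).
Proof.
move=> Hp; rewrite /conjp /pcat.
apply: (path_cat (m := o)); first exact: (path_opp (path_single (edge H))).
exact: (path_cat Hp (path_single (edge H))).
Qed.

Lemma supp_in_cat p q o : supp_in p o -> supp_in q o -> supp_in (pcat p q) o.
Proof. by rewrite /supp_in /pcat all_cat => -> ->. Qed.

Lemma supp_in_opp p o : supp_in p o -> supp_in (popp p) o.
Proof. by rewrite /supp_in /popp all_rev all_map. Qed.

Lemma supp_in_iota o : supp_in [:: iota1 o] o.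
Proof. by rewrite /supp_in /= lexx. Qed.

Lemma supp_in_conjp o a (H : o <= a) p : supp_in p o -> supp_in (conjp H p) a.
Proof.
move=> Hp; rewrite /conjp.
have He : supp_in [:: edge H] a by rewrite /supp_in /= lexx.
apply: (supp_in_cat _ (supp_in_opp He)); apply: (supp_in_cat He).
move: Hp; rewrite /supp_in => Hp.
by apply: sub_all Hp => b /= Hb; exact: le_trans Hb H.
Qed.

Definition Lam (o : K) : Type :=
  {C : seq simplex1 -> Prop | exists p, is_loop o p /\ C = wequiv p}.

Definition cls (o : K) (p : seq simplex1) (Hp : is_loop o p) : Lam o :=
  exist _ (wequiv p) (ex_intro _ p (conj Hp erefl)).

Definition rep (o : K) (x : Lam o) : seq simplex1 :=
  proj1_sig (constructive_indefinite_description _ (proj2_sig x)).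
Lemma rep_loop o (x : Lam o) : is_loop o (rep x).
Proof. exact: (proj1 (proj2_sig (constructive_indefinite_description _ (proj2_sig x)))). Qed.

Definition Lmul (o : K) (x y : Lam o) : Lam o := cls (loop_cat (rep_loop x) (rep_loop y)).
Definition Lone (o : K) : Lam o := cls (loop_iota o).
Definition Linv (o : K) (x : Lam o) : Lam o := cls (loop_opp (rep_loop x)).

Definition lam (o a : K) (H : o <= a) (x : Lam o) : Lam a :=
  cls (loop_conjp H (rep_loop x)).

Definition Laml (o : K) : Type :=
  {C : seq simplex1 -> Prop | exists p, [/\ is_loop o p, supp_in p o & C = wequiv p]}.

Definition clsl (o : K) (p : seq simplex1) (Hp : is_loop o p) (Hs : supp_in p o) : Laml o :=
  exist _ (wequiv p) (ex_intro _ p (And3 Hp Hs erefl)).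

Definition repl (o : K) (x : Laml o) : seq simplex1 :=
  proj1_sig (constructive_indefinite_description _ (proj2_sig x)).
Lemma repl_spec o (x : Laml o) : is_loop o (repl x) /\ supp_in (repl x) o.
Proof.
by case: (proj2_sig (constructive_indefinite_description _ (proj2_sig x))).
Qed.

Definition Llmul (o : K) (x y : Laml o) : Laml o :=
  clsl (loop_cat (proj1 (repl_spec x)) (proj1 (repl_spec y)))
       (supp_in_cat (proj2 (repl_spec x)) (proj2 (repl_spec y))).
Definition Llone (o : K) : Laml o := clsl (loop_iota o) (supp_in_iota o).
Definition Llinv (o : K) (x : Laml o) : Laml o :=
  clsl (loop_opp (proj1 (repl_spec x))) (supp_in_opp (proj2 (repl_spec x))).
Definition laml (o a : K) (H : o <= a) (x : Laml o) : Laml a :=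
  clsl (loop_conjp H (proj1 (repl_spec x))) (supp_in_conjp H (proj2 (repl_spec x))).

Lemma laml_lam o (x : Laml o) : exists p, is_loop o p /\ sval x = wequiv p.
Proof. by case: (proj2_sig x) => p [Hp _ He]; exists p. Qed.
Definition incl (o : K) (x : Laml o) : Lam o := exist _ (sval x) (laml_lam x).

Definition is_net (G : K -> Type) (mul : forall o, G o -> G o -> G o)
    (one : forall o, G o) (inv : forall o, G o -> G o)
    (j : forall o a : K, o <= a -> G o -> G a) : Prop :=
  [/\ (forall o, is_group (mul o) (one o) (inv o)),
      (forall o a (H : o <= a), is_hom (mul o) (mul a) (j o a H) /\ injective (j o a H)) &
      (forall o a e (Hoa : o <= a) (Hae : a <= e) (Hoe : o <= e) (x : G o),
          j o e Hoe x = j a e Hae (j o a Hoa x))].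

Definition is_net_bundle (G : K -> Type) mul one inv j : Prop :=
  @is_net G mul one inv j /\ (forall o a (H : o <= a), bijective (j o a H)).

Definition net_mono (G G' : K -> Type)
    (mul : forall o, G o -> G o -> G o) (mul' : forall o, G' o -> G' o -> G' o)
    (j : forall o a : K, o <= a -> G o -> G a) (j' : forall o a : K, o <= a -> G' o -> G' a)
    (phi : forall o, G o -> G' o) : Prop :=
  (forall o, is_hom (mul o) (mul' o) (phi o) /\ injective (phi o)) /\
  (forall o a (H : o <= a) (x : G o), phi a (j o a H x) = j' o a H (phi o x)).

Record symmetry := Symmetry {
  sgrp : Type;
  smul : sgrp -> sgrp -> sgrp;
  sone : sgrp;
  sinv : sgrp -> sgrp;
  sgrp_group : is_group smul sone sinv;
  sact : sgrp -> K -> K;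
  sact_mono : forall g x y, x <= y -> sact g x <= sact g y;
  sact_refl : forall g x y, sact g x <= sact g y -> x <= y;
  sact_bij : forall g, bijective (sact g);
  sact_one : forall x, sact sone x = x;
  sact_mul : forall g h x, sact (smul h g) x = sact h (sact g x);
  sact_faithful : forall g h, (forall x, sact g x = sact h x) -> g = h }.

Variable S : symmetry.

Definition sact1 (g : sgrp S) (b : simplex1) : simplex1 :=
  Simplex1 (sact_mono g (face0_le b)) (sact_mono g (face1_le b)).
Definition pact (g : sgrp S) (p : seq simplex1) : seq simplex1 := map (sact1 g) p.

Lemma path_act g a e p :
  path_from_to a e p -> path_from_to (sact g a) (sact g e) (pact g p).
Proof.
elim: p a => [|b p IH] a; first by case.
case: p IH => [|c p] IH.
  by case=> _ /= <- <-; split.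
move=> /path_cons2 [-> Hp]; rewrite /pact map_cons -cat1s.
exact: (path_cat (path_single (sact1 g b)) (IH _ Hp)).
Qed.

Lemma loop_act g o p : is_loop o p -> is_loop (sact g o) (pact g p).
Proof. exact: path_act. Qed.

Lemma supp_in_act g o p : supp_in p o -> supp_in (pact g p) (sact g o).
Proof.
rewrite /supp_in /pact all_map => Hp.
by apply: sub_all Hp => b /= Hb; exact: sact_mono.
Qed.

Definition Lact (g : sgrp S) (o : K) (x : Lam o) : Lam (sact g o) :=
  cls (loop_act g (rep_loop x)).
Definition Llact (g : sgrp S) (o : K) (x : Laml o) : Laml (sact g o) :=
  clsl (loop_act g (proj1 (repl_spec x))) (supp_in_act g (proj2 (repl_spec x))).

(* G-covariant net: isomorphisms alpha^g_o : G_o -> G_(g o) with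
   alpha^h_(g o) o alpha^g_o = alpha^(h g)_o  (up to the canonical
   identification of G_((hg) o) with G_(h (g o))) and
   alpha^g_o o j_(o a) = j_(g o, g a) o alpha^g_a  for a <= o. *)
Definition covariant (G : K -> Type) (mul : forall o, G o -> G o -> G o)
    (j : forall o a : K, o <= a -> G o -> G a)
    (alpha : forall (g : sgrp S) (o : K), G o -> G (sact g o)) : Prop :=
  [/\ (forall g o, is_hom (mul o) (mul (sact g o)) (alpha g o) /\ bijective (alpha g o)),
      (forall g h o (e : sact (smul h g) o = sact h (sact g o)) (x : G o),
          alpha h (sact g o) (alpha g o x) = eq_rect _ G (alpha (smul h g) o x) _ e) &
      (forall g o a (H : a <= o) (H' : sact g a <= sact g o) (x : G a),
          alpha g o (j a o H x) = j _ _ H' (alpha g a x))].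

Definition cov_morph (G G' : K -> Type)
    (alpha : forall (g : sgrp S) (o : K), G o -> G (sact g o))
    (beta : forall (g : sgrp S) (o : K), G' o -> G' (sact g o))
    (phi : forall o, G o -> G' o) : Prop :=
  forall g o (x : G o), beta g o (phi o x) = phi (sact g o) (alpha g o x).

End Poset.

(* Main.v *)
Require Import Defs.
From Stdlib Require Import Relations ClassicalEpsilon ProofIrrelevance FunctionalExtensionality PropExtensionality.
From mathcomp Require Import all_boot all_order.
Set Implicit Arguments. Unset Strict Implicit. Unset Printing Implicit Defensive.
Import Order.Theory.
Local Open Scope order_scope.

Lemma simplex_eq d (K : porderType d) (b c : simplex1 K) :
  face0 b = face0 c -> face1 b = face1 c -> supp b = supp c -> b = c.
Proof.
case: b => f0 f1 s H0 H1; case: c => g0 g1 t G0 G1 /= E0 E1 E2.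
subst; f_equal; apply: bool_irrelevance.
Qed.

Lemma opp1K d (K : porderType d) : involutive (@opp1 d K).
Proof. by case. Qed.

Lemma poppK d (K : porderType d) (p : seq (simplex1 K)) : popp (popp p) = p.
Proof. by rewrite /popp map_rev revK -map_comp (eq_map (@opp1K d K)) map_id. Qed.

Lemma popp_cons d (K : porderType d) (b : simplex1 K) p : popp (b :: p) = popp p ++ [:: opp1 b].
Proof. by rewrite /popp map_cons rev_cons cats1. Qed.

Lemma popp1 d (K : porderType d) (b : simplex1 K) : popp [:: b] = [:: opp1 b].
Proof. by []. Qed.

Lemma path_is d (K : porderType d) (a e : K) p : path_from_to a e p -> is_path p.
Proof. by case. Qed.

Lemma path_nil d (K : porderType d) (p : seq (simplex1 K)) : is_path p -> p <> [::].
Proof. by case: p. Qed.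

Lemma pft_iff d (K : porderType d) (a e : K) p b0 : p <> [::] ->
  path_from_to a e p <-> [/\ is_path p, face1 (head b0 p) = a & face0 (last b0 p) = e].
Proof. by case: p. Qed.

Lemma chain_mid d (K : porderType d) (b c : simplex1 K) s t :
  chain b (s ++ c :: t) -> face0 (last b s) = face1 c.
Proof. by elim: s b => [|x s IH] b /= [H1 H2] //; exact: IH. Qed.

Lemma last_cat_ne d (K : porderType d) (z z' : simplex1 K) x y :
  x <> [::] -> last z (x ++ y) = last z' (x ++ y).
Proof. by case: x => //= b x _; rewrite !last_cat. Qed.

Lemma wstep_ends d (K : porderType d) (p q : seq (simplex1 K)) b0 :
  wstep p q -> face1 (head b0 p) = face1 (head b0 q) /\ face0 (last b0 p) = face0 (last b0 q).
Proof.
case=> Pp Pq [l1 [l2 [x [y [M [Ep Eq]]]]]]; subst.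
case: M Pp Pq => [a|o a e Hea Hao Heo|b] Pp Pq.
- split.
  + case: l1 Pp Pq => [|c l1] //= Pp Pq.
    case: l2 Pp Pq => [|c l2] //= Pp [E _]; by rewrite -E.
  + case: l2 Pp Pq => [|c l2] Pp Pq.
    * case: l1 Pp Pq => [|c l1] //= Pp Pq.
      by rewrite cats0 last_cat (chain_mid Pq).
    * by rewrite !last_cat /=.
- split; first by case: l1 Pp Pq.
  by rewrite !last_cat /=; case: l2 Pp Pq.
- split; first by case: l1 Pp Pq.
  by rewrite !last_cat /=; case: l2 Pp Pq.
Qed.

Lemma wequiv_path d (K : porderType d) (p q : seq (simplex1 K)) :
  wequiv p q -> forall a e, path_from_to a e p <-> path_from_to a e q.
Proof.
elim=> {p q} [p q S|p|p q _ IH|p q r _ IH1 _ IH2] a e.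
- have [Pp Pq _] := S; have [E1 E2] := wstep_ends (iota1 a) S.
  rewrite (pft_iff _ _ (iota1 a) (path_nil Pp)) (pft_iff _ _ (iota1 a) (path_nil Pq)) E1 E2.
  by split; case.
- by [].
- by rewrite IH.
- by rewrite IH1 IH2.
Qed.

Lemma weq_step d (K : porderType d) (p q : seq (simplex1 K)) : wstep p q -> wequiv p q.
Proof. exact: rst_step. Qed.
Lemma weq_refl d (K : porderType d) (p : seq (simplex1 K)) : wequiv p p.
Proof. exact: rst_refl. Qed.
Lemma weq_sym d (K : porderType d) (p q : seq (simplex1 K)) : wequiv p q -> wequiv q p.
Proof. exact: rst_sym. Qed.
Lemma weq_trans d (K : porderType d) (p q r : seq (simplex1 K)) :
  wequiv p q -> wequiv q r -> wequiv p r.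
Proof. exact: rst_trans. Qed.

Lemma weq_ctx d (K : porderType d) (l r : seq (simplex1 K)) (a e : K) m m' :
  (forall m0, path_from_to a e m0 -> is_path (l ++ m0 ++ r)) ->
  wequiv m m' -> path_from_to a e m -> wequiv (l ++ m ++ r) (l ++ m' ++ r).
Proof.
move=> HP W; elim: W => {m m'} [m m' S|m|m m' W IH|m n m' W1 IH1 W2 IH2] Hm.
- apply: weq_step; have [Pm Pm' [l1 [l2 [x [y [M [E1 E2]]]]]]] := S.
  have Hm' : path_from_to a e m' by rewrite -(wequiv_path (weq_step S)).
  split; [exact: HP|exact: HP|].
  exists (l ++ l1), (l2 ++ r), x, y; split=> //; by rewrite E1 E2 !catA.
- exact: weq_refl.
- apply: weq_sym; apply: IH; by rewrite (wequiv_path W).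
- apply: weq_trans (IH1 Hm) (IH2 _); by rewrite -(wequiv_path W1).
Qed.

Lemma weq_catl d (K : porderType d) (a m e : K) (p q q' : seq (simplex1 K)) :
  path_from_to a m p -> path_from_to m e q -> wequiv q q' -> wequiv (p ++ q) (p ++ q').
Proof.
move=> Hp Hq W; rewrite -[q]cats0 -[q']cats0.
apply: (weq_ctx (a := m) (e := e)) => // m0 Hm0.
by rewrite cats0; case: (path_cat Hp Hm0).
Qed.

Lemma weq_catr d (K : porderType d) (a m e : K) (p p' q : seq (simplex1 K)) :
  path_from_to a m p -> path_from_to m e q -> wequiv p p' -> wequiv (p ++ q) (p' ++ q).
Proof.
move=> Hp Hq W; rewrite -[p ++ q]cat0s -[p' ++ q]cat0s.
apply: (weq_ctx (a := a) (e := m)) => // m0 Hm0.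
by case: (path_cat Hm0 Hq).
Qed.

Lemma weq_cat d (K : porderType d) (a m e : K) (p p' q q' : seq (simplex1 K)) :
  path_from_to a m p -> path_from_to m e q -> wequiv p p' -> wequiv q q' ->
  wequiv (p ++ q) (p' ++ q').
Proof.
move=> Hp Hq W1 W2; apply: (weq_trans (weq_catr Hp Hq W1) _).
apply: (weq_catl (a := a) (m := m) (e := e)) => //; by rewrite -(wequiv_path W1).
Qed.

Lemma weq_iota_l d (K : porderType d) (a e : K) p :
  path_from_to a e p -> wequiv ([:: iota1 a] ++ p) p.
Proof.
move=> Hp; apply: weq_sym; apply: weq_step; split.
- exact: path_is Hp.
- by case: (path_cat (path_single (iota1 a)) Hp).
- by exists [::], p, [::], [:: iota1 a]; split=> //; exact: wm_iota.
Qed.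

Lemma weq_iota_r d (K : porderType d) (a e : K) p :
  path_from_to a e p -> wequiv (p ++ [:: iota1 e]) p.
Proof.
move=> Hp; apply: weq_sym; apply: weq_step; split.
- exact: path_is Hp.
- by case: (path_cat Hp (path_single (iota1 e))).
- exists p, [::], [::], [:: iota1 e]; split; first exact: wm_iota.
  by rewrite /= !cats0.
Qed.

Lemma weq_opp1 d (K : porderType d) (b : simplex1 K) :
  wequiv [:: b; opp1 b] [:: iota1 (face1 b)].
Proof.
apply: weq_step; split => //.
by exists [::], [::], [:: b; opp1 b], [:: iota1 (face1 b)]; split=> //; exact: wm_opp.
Qed.

Lemma weq_cancel d (K : porderType d) (a e : K) p :
  path_from_to a e p -> wequiv (p ++ popp p) [:: iota1 a].
Proof.
elim: p a => [|b p IH] a; first by case.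
case: p IH => [|c p] IH.
  by case=> _ /= <- _; exact: weq_opp1.
move=> /path_cons2 [-> Hs]; set s := c :: p in IH Hs *.
rewrite popp_cons -cat1s -!catA.
have Hb := path_single b; have Hob := path_single (opp1 b).
have Hsp := path_cat Hs (path_opp Hs).
apply: weq_trans (_ : wequiv ([:: b] ++ [:: iota1 (face0 b)] ++ [:: opp1 b]) _).
  apply: (weq_catl Hb _ _); first exact: path_cat Hs (path_cat (path_opp Hs) Hob).
  rewrite catA; apply: (weq_catr Hsp Hob _); exact: IH.
apply: weq_trans (_ : wequiv ([:: b] ++ [:: opp1 b]) _); last exact: weq_opp1.
apply: (weq_catl Hb _ _); first exact: path_cat (path_single (iota1 (face0 b))) Hob.
exact: weq_iota_l Hob.
Qed.

Lemma weq_cancel2 d (K : porderType d) (a e : K) p :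
  path_from_to a e p -> wequiv (popp p ++ p) [:: iota1 e].
Proof. by move=> Hp; have := weq_cancel (path_opp Hp); rewrite poppK. Qed.

Lemma weq_popp d (K : porderType d) (a e : K) p p' :
  path_from_to a e p -> wequiv p p' -> wequiv (popp p) (popp p').
Proof.
move=> Hp W; have Hp' : path_from_to a e p' by rewrite -(wequiv_path W).
have Ho := path_opp Hp; have Ho' := path_opp Hp'.
apply: (weq_trans (weq_sym (weq_iota_r Ho)) _).
apply: weq_trans (_ : wequiv (popp p ++ (p' ++ popp p')) _).
  apply: (weq_catl Ho _ _); first exact: path_single (iota1 a).
  exact: weq_sym (weq_cancel Hp').
apply: weq_trans (_ : wequiv (popp p ++ (p ++ popp p')) _).
  apply: (weq_catl Ho _ _); first exact: path_cat Hp' Ho'.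
  apply: (weq_catr Hp' Ho' _); exact: weq_sym.
rewrite catA; apply: weq_trans (_ : wequiv ([:: iota1 e] ++ popp p') _).
  apply: (weq_catr (path_cat Ho Hp) Ho' _); exact: weq_cancel2 Hp.
exact: weq_iota_l Ho'.
Qed.

Lemma weq_mid0 d (K : porderType d) (a y : K) (m r : seq (simplex1 K)) :
  path_from_to a y r -> path_from_to a a m -> wequiv m [:: iota1 a] -> wequiv (m ++ r) r.
Proof.
move=> Hr Hm W; apply: weq_trans (_ : wequiv ([:: iota1 a] ++ r) _); last exact: weq_iota_l Hr.
exact: weq_catr Hm Hr W.
Qed.

Lemma weq_sandwich d (K : porderType d) (b : simplex1 K) p :
  path_from_to (face1 b) (face1 b) p -> wequiv (b :: opp1 b :: p ++ [:: b; opp1 b]) p.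
Proof.
move=> Hp.
have Hbb : path_from_to (face1 b) (face1 b) [:: b; opp1 b].
  exact: path_cat (path_single b) (path_single (opp1 b)).
apply: weq_trans (_ : wequiv (p ++ [:: b; opp1 b]) _).
  exact: (weq_mid0 (path_cat Hp Hbb) Hbb (weq_opp1 b)).
apply: weq_trans (_ : wequiv (p ++ [:: iota1 (face1 b)]) _); last exact: weq_iota_r Hp.
exact: weq_catl Hp Hbb (weq_opp1 b).
Qed.

Lemma weq_fun d (K : porderType d) (p q : seq (simplex1 K)) :
  wequiv p q -> wequiv p = wequiv q.
Proof.
move=> W; apply: functional_extensionality => r; apply: propositional_extensionality.
split=> H; [exact: weq_trans (weq_sym W) H | exact: weq_trans W H].
Qed.

Lemma fun_weq d (K : porderType d) (p q : seq (simplex1 K)) :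
  wequiv p = wequiv q -> wequiv p q.
Proof. by move=> ->; exact: weq_refl. Qed.

Lemma Lam_ext d (K : porderType d) (o : K) (x y : Lam o) : sval x = sval y -> x = y.
Proof.
case: x => x Hx; case: y => y Hy /= E; subst; f_equal; apply: proof_irrelevance.
Qed.

Lemma rep_sval d (K : porderType d) (o : K) (x : Lam o) : sval x = wequiv (rep x).
Proof. exact: (proj2 (proj2_sig (constructive_indefinite_description _ (proj2_sig x)))). Qed.

Lemma rep_cls d (K : porderType d) (o : K) p (Hp : is_loop o p) : wequiv (rep (cls Hp)) p.
Proof. apply: weq_sym; apply: fun_weq; exact: (rep_sval (cls Hp)). Qed.

Lemma cls_eq d (K : porderType d) (o : K) p q (Hp : is_loop o p) (Hq : is_loop o q) :
  wequiv p q -> cls Hp = cls Hq.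
Proof. by move=> W; apply: Lam_ext; exact: weq_fun. Qed.

Lemma cls_weq d (K : porderType d) (o : K) p q (Hp : is_loop o p) (Hq : is_loop o q) :
  cls Hp = cls Hq -> wequiv p q.
Proof. by move=> E; apply: fun_weq; exact: (congr1 sval E). Qed.

Lemma Lam_ind d (K : porderType d) (o : K) (P : Lam o -> Prop) :
  (forall p (Hp : is_loop o p), P (cls Hp)) -> forall x, P x.
Proof.
move=> H x; have -> : x = cls (rep_loop x) by apply: Lam_ext; exact: rep_sval.
exact: H.
Qed.

Lemma Lmul_cls d (K : porderType d) (o : K) p q (Hp : is_loop o p) (Hq : is_loop o q) :
  Lmul (cls Hp) (cls Hq) = cls (loop_cat Hp Hq).
Proof.
apply: cls_eq; rewrite /pcat.
exact: weq_cat (rep_loop (cls Hq)) (rep_loop (cls Hp)) (rep_cls Hq) (rep_cls Hp).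
Qed.

Lemma Linv_cls d (K : porderType d) (o : K) p (Hp : is_loop o p) :
  Linv (cls Hp) = cls (loop_opp Hp).
Proof. apply: cls_eq; exact: weq_popp (rep_loop (cls Hp)) (rep_cls Hp). Qed.

Lemma conjpE d (K : porderType d) (o a : K) (H : o <= a) p :
  conjp H p = [:: opp1 (edge H)] ++ p ++ [:: edge H].
Proof. by []. Qed.

Lemma weq_conjp d (K : porderType d) (o a : K) (H : o <= a) p q :
  is_loop o p -> wequiv p q -> wequiv (conjp H p) (conjp H q).
Proof.
move=> Hp W; rewrite !conjpE.
have He := path_single (edge H); have Ho := path_single (opp1 (edge H)).
apply: (weq_catl Ho (path_cat Hp He) _); exact: weq_catr Hp He W.
Qed.

Lemma lam_cls d (K : porderType d) (o a : K) (H : o <= a) p (Hp : is_loop o p) :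
  lam H (cls Hp) = cls (loop_conjp H Hp).
Proof. apply: cls_eq; exact: weq_conjp (rep_loop (cls Hp)) (rep_cls Hp). Qed.

Lemma Lam_group d (K : porderType d) (o : K) : is_group (@Lmul d K o) (Lone o) (@Linv d K o).
Proof.
split.
- elim/Lam_ind => p Hp; elim/Lam_ind => q Hq; elim/Lam_ind => r Hr.
  rewrite !Lmul_cls; apply: cls_eq; rewrite /pcat catA; exact: weq_refl.
- elim/Lam_ind => p Hp; rewrite /Lone Lmul_cls; apply: cls_eq; exact: weq_iota_r Hp.
- elim/Lam_ind => p Hp; rewrite /Lone Lmul_cls; apply: cls_eq; exact: weq_iota_l Hp.
- elim/Lam_ind => p Hp; rewrite Linv_cls Lmul_cls /Lone; apply: cls_eq; exact: weq_cancel Hp.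
- elim/Lam_ind => p Hp; rewrite Linv_cls Lmul_cls /Lone; apply: cls_eq; exact: weq_cancel2 Hp.
Qed.

Lemma conj_hom d (K : porderType d) (o a : K) (H : o <= a) p q :
  is_loop o p -> is_loop o q ->
  wequiv (conjp H (pcat p q)) (pcat (conjp H p) (conjp H q)).
Proof.
move=> Hp Hq; rewrite /pcat !conjpE -!catA.
have He := path_single (edge H); have Ho := path_single (opp1 (edge H)).
apply: (weq_catl Ho (path_cat Hq (path_cat Hp He)) _).
apply: (weq_catl Hq (path_cat Hp He) _).
apply: weq_sym; rewrite /= -cat1s.
apply: (weq_mid0 (path_cat Hp He) (path_cat He Ho)); exact: weq_opp1.
Qed.

Lemma unconj d (K : porderType d) (o a : K) (H : o <= a) p :
  is_loop o p -> wequiv ([:: edge H] ++ conjp H p ++ [:: opp1 (edge H)]) p.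
Proof. by move=> Hp; rewrite conjpE -!catA /=; exact: weq_sandwich. Qed.

Lemma loop_unconj d (K : porderType d) (o a : K) (H : o <= a) q :
  is_loop a q -> is_loop o ([:: edge H] ++ q ++ [:: opp1 (edge H)]).
Proof.
move=> Hq; apply: path_cat (path_single (edge H)) _.
exact: path_cat Hq (path_single (opp1 (edge H))).
Qed.

Lemma reconj d (K : porderType d) (o a : K) (H : o <= a) q :
  is_loop a q -> wequiv (conjp H ([:: edge H] ++ q ++ [:: opp1 (edge H)])) q.
Proof.
move=> Hq; rewrite conjpE -!catA /=.
have := weq_sandwich (b := opp1 (edge H)) Hq; by rewrite opp1K.
Qed.

Lemma conj_inj d (K : porderType d) (o a : K) (H : o <= a) p q :
  is_loop o p -> is_loop o q -> wequiv (conjp H p) (conjp H q) -> wequiv p q.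
Proof.
move=> Hp Hq W.
apply: weq_trans (weq_sym (unconj H Hp)) _.
apply: weq_trans _ (unconj H Hq).
have Hc := loop_conjp H Hp; have He := path_single (edge H).
have Ho := path_single (opp1 (edge H)).
apply: (weq_catl He (path_cat Hc Ho)); exact: (weq_catr Hc Ho W).
Qed.

Lemma weq_comp d (K : porderType d) (o a e : K) (Hoa : o <= a) (Hae : a <= e) (Hoe : o <= e) :
  wequiv [:: edge Hoa; edge Hae] [:: edge Hoe].
Proof.
apply: weq_step; split => //.
exists [::], [::], [:: edge Hoa; edge Hae], [:: edge Hoe]; split=> //.
exact: wm_comp.
Qed.

Lemma conj_trans d (K : porderType d) (o a e : K) (Hoa : o <= a) (Hae : a <= e) (Hoe : o <= e) p :
  is_loop o p -> wequiv (conjp Hoe p) (conjp Hae (conjp Hoa p)).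
Proof.
move=> Hp.
have -> : conjp Hae (conjp Hoa p) = popp [:: edge Hoa; edge Hae] ++ (p ++ [:: edge Hoa; edge Hae]).
  by rewrite !conjpE -!catA.
rewrite conjpE; apply: weq_sym.
have HAB : path_from_to o e [:: edge Hoa; edge Hae].
  exact: path_cat (path_single (edge Hoa)) (path_single (edge Hae)).
apply: (weq_cat (path_opp HAB) (path_cat Hp HAB)).
  exact: (weq_popp HAB (weq_comp Hoa Hae Hoe)).
exact: (weq_catl Hp HAB (weq_comp Hoa Hae Hoe)).
Qed.

Definition lam_inv d (K : porderType d) (o a : K) (H : o <= a) (y : Lam a) : Lam o :=
  cls (loop_unconj H (rep_loop y)).

Lemma lam_inv_cls d (K : porderType d) (o a : K) (H : o <= a) q (Hq : is_loop a q) :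
  lam_inv H (cls Hq) = cls (loop_unconj H Hq).
Proof.
apply: cls_eq; have He := path_single (edge H); have Ho := path_single (opp1 (edge H)).
have Hr := rep_loop (cls Hq).
apply: (weq_catl He (path_cat Hr Ho)); exact: (weq_catr Hr Ho (rep_cls Hq)).
Qed.

Lemma Lam_net d (K : porderType d) : is_net_bundle (@Lmul d K) (@Lone d K) (@Linv d K) (@lam d K).
Proof.
split; last first.
  move=> o a H; exists (lam_inv H).
  - elim/Lam_ind => p Hp; rewrite lam_cls lam_inv_cls; apply: cls_eq; exact: unconj.
  - elim/Lam_ind => q Hq; rewrite lam_inv_cls lam_cls; apply: cls_eq; exact: reconj.
split.
- exact: Lam_group.
- move=> o a H; split.
  + elim/Lam_ind => p Hp; elim/Lam_ind => q Hq.
    rewrite (Lmul_cls Hp Hq) (lam_cls H Hp) (lam_cls H Hq) Lmul_cls lam_cls.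
    apply: cls_eq; exact: conj_hom.
  + elim/Lam_ind => p Hp; elim/Lam_ind => q Hq; rewrite !lam_cls => E.
    apply: cls_eq; exact: conj_inj Hp Hq (cls_weq E).
- move=> o a e Hoa Hae Hoe; elim/Lam_ind => p Hp.
  rewrite !lam_cls; apply: cls_eq; exact: conj_trans.
Qed.

Lemma Laml_ext d (K : porderType d) (o : K) (x y : Laml o) : sval x = sval y -> x = y.
Proof.
case: x => x Hx; case: y => y Hy /= E; subst; f_equal; apply: proof_irrelevance.
Qed.

Lemma repl_sval d (K : porderType d) (o : K) (x : Laml o) : sval x = wequiv (repl x).
Proof. by case: (proj2_sig (constructive_indefinite_description _ (proj2_sig x))). Qed.

Lemma rep_clsl d (K : porderType d) (o : K) p (Hp : is_loop o p) (Hs : supp_in p o) :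
  wequiv (repl (clsl Hp Hs)) p.
Proof. apply: weq_sym; apply: fun_weq; exact: (repl_sval (clsl Hp Hs)). Qed.

Lemma clsl_eq d (K : porderType d) (o : K) p q (Hp : is_loop o p) (Hq : is_loop o q)
  (Hs : supp_in p o) (Hs' : supp_in q o) : wequiv p q -> clsl Hp Hs = clsl Hq Hs'.
Proof. by move=> W; apply: Laml_ext; exact: weq_fun. Qed.

Lemma clsl_weq d (K : porderType d) (o : K) p q (Hp : is_loop o p) (Hq : is_loop o q)
  (Hs : supp_in p o) (Hs' : supp_in q o) : clsl Hp Hs = clsl Hq Hs' -> wequiv p q.
Proof. by move=> E; apply: fun_weq; exact: (congr1 sval E). Qed.

Lemma Laml_ind d (K : porderType d) (o : K) (P : Laml o -> Prop) :
  (forall p (Hp : is_loop o p) (Hs : supp_in p o), P (clsl Hp Hs)) -> forall x, P x.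
Proof.
move=> H x.
have -> : x = clsl (proj1 (repl_spec x)) (proj2 (repl_spec x)).
  by apply: Laml_ext; exact: repl_sval.
exact: H.
Qed.

Lemma repl_loop d (K : porderType d) (o : K) (x : Laml o) : is_loop o (repl x).
Proof. exact: proj1 (repl_spec x). Qed.

Lemma Llmul_clsl d (K : porderType d) (o : K) p q (Hp : is_loop o p) (Hq : is_loop o q)
  (Hs : supp_in p o) (Hs' : supp_in q o) :
  Llmul (clsl Hp Hs) (clsl Hq Hs') = clsl (loop_cat Hp Hq) (supp_in_cat Hs Hs').
Proof.
apply: clsl_eq; rewrite /pcat.
exact: weq_cat (repl_loop (clsl Hq Hs')) (repl_loop (clsl Hp Hs)) (rep_clsl Hq Hs') (rep_clsl Hp Hs).
Qed.

Lemma Llinv_clsl d (K : porderType d) (o : K) p (Hp : is_loop o p) (Hs : supp_in p o) :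
  Llinv (clsl Hp Hs) = clsl (loop_opp Hp) (supp_in_opp Hs).
Proof. apply: clsl_eq; exact: weq_popp (repl_loop (clsl Hp Hs)) (rep_clsl Hp Hs). Qed.

Lemma laml_clsl d (K : porderType d) (o a : K) (H : o <= a) p (Hp : is_loop o p) (Hs : supp_in p o) :
  laml H (clsl Hp Hs) = clsl (loop_conjp H Hp) (supp_in_conjp H Hs).
Proof. apply: clsl_eq; exact: weq_conjp (repl_loop (clsl Hp Hs)) (rep_clsl Hp Hs). Qed.

Lemma Laml_group d (K : porderType d) (o : K) : is_group (@Llmul d K o) (Llone o) (@Llinv d K o).
Proof.
split.
- elim/Laml_ind => p Hp Hs; elim/Laml_ind => q Hq Hs'; elim/Laml_ind => r Hr Hs''.
  rewrite !Llmul_clsl; apply: clsl_eq; rewrite /pcat catA; exact: weq_refl.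
- elim/Laml_ind => p Hp Hs; rewrite /Llone Llmul_clsl; apply: clsl_eq; exact: weq_iota_r Hp.
- elim/Laml_ind => p Hp Hs; rewrite /Llone Llmul_clsl; apply: clsl_eq; exact: weq_iota_l Hp.
- elim/Laml_ind => p Hp Hs; rewrite Llinv_clsl Llmul_clsl /Llone; apply: clsl_eq; exact: weq_cancel Hp.
- elim/Laml_ind => p Hp Hs; rewrite Llinv_clsl Llmul_clsl /Llone; apply: clsl_eq; exact: weq_cancel2 Hp.
Qed.

Lemma Laml_net d (K : porderType d) : is_net (@Llmul d K) (@Llone d K) (@Llinv d K) (@laml d K).
Proof.
split.
- exact: Laml_group.
- move=> o a H; split.
  + elim/Laml_ind => p Hp Hs; elim/Laml_ind => q Hq Hs'.
    rewrite (Llmul_clsl Hp Hq) (laml_clsl H Hp) (laml_clsl H Hq) Llmul_clsl laml_clsl.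
    apply: clsl_eq; exact: conj_hom.
  + elim/Laml_ind => p Hp Hs; elim/Laml_ind => q Hq Hs'; rewrite !laml_clsl => E.
    apply: clsl_eq; exact: conj_inj Hp Hq (clsl_weq E).
- move=> o a e Hoa Hae Hoe; elim/Laml_ind => p Hp Hs.
  rewrite !laml_clsl; apply: clsl_eq; exact: conj_trans.
Qed.

Lemma incl_clsl d (K : porderType d) (o : K) p (Hp : is_loop o p) (Hs : supp_in p o) :
  incl (clsl Hp Hs) = cls Hp.
Proof. by apply: Lam_ext. Qed.

Lemma incl_mono d (K : porderType d) :
  net_mono (@Llmul d K) (@Lmul d K) (@laml d K) (@lam d K) (@incl d K).
Proof.
split.
- move=> o; split.
  + elim/Laml_ind => p Hp Hs; elim/Laml_ind => q Hq Hs'.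
    by rewrite Llmul_clsl !incl_clsl Lmul_cls.
  + move=> x y E; apply: Laml_ext; exact: (congr1 sval E).
- move=> o a H; elim/Laml_ind => p Hp Hs.
  by rewrite laml_clsl !incl_clsl lam_cls.
Qed.

Lemma sact1_iota d (K : porderType d) (S : symmetry K) (g : sgrp S) (a : K) :
  sact1 g (iota1 a) = iota1 (sact g a).
Proof. exact: simplex_eq. Qed.

Lemma sact1_edge d (K : porderType d) (S : symmetry K) (g : sgrp S) (o a : K)
  (H : a <= o) (H' : sact g a <= sact g o) : sact1 g (edge H) = edge H'.
Proof. exact: simplex_eq. Qed.

Lemma sact1_opp d (K : porderType d) (S : symmetry K) (g : sgrp S) b :
  sact1 g (opp1 b) = opp1 (sact1 g b).
Proof. exact: simplex_eq. Qed.

Lemma sact1_mul d (K : porderType d) (S : symmetry K) (g h : sgrp S) b :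
  sact1 h (sact1 g b) = sact1 (smul h g) b.
Proof. by apply: simplex_eq; rewrite /= sact_mul. Qed.

Lemma pact_mul d (K : porderType d) (S : symmetry K) (g h : sgrp S) p :
  pact h (pact g p) = pact (smul h g) p.
Proof. by rewrite /pact -map_comp; apply: eq_map => b /=; rewrite sact1_mul. Qed.

Lemma sact_inv_l d (K : porderType d) (S : symmetry K) (g : sgrp S) x :
  sact (sinv g) (sact g x) = x.
Proof. by case: (sgrp_group S) => _ _ _ Hl _; rewrite -sact_mul Hl sact_one. Qed.

Lemma sact_inv_r d (K : porderType d) (S : symmetry K) (g : sgrp S) x :
  sact g (sact (sinv g) x) = x.
Proof. by case: (sgrp_group S) => _ _ _ _ Hr; rewrite -sact_mul Hr sact_one. Qed.

Lemma pact_inv_l d (K : porderType d) (S : symmetry K) (g : sgrp S) p :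
  pact (sinv g) (pact g p) = p.
Proof.
rewrite pact_mul /pact -[RHS]map_id; apply: eq_map => b.
by apply: simplex_eq; rewrite /= sact_mul sact_inv_l.
Qed.

Lemma pact_inv_r d (K : porderType d) (S : symmetry K) (g : sgrp S) p :
  pact g (pact (sinv g) p) = p.
Proof.
rewrite pact_mul /pact -[RHS]map_id; apply: eq_map => b.
by apply: simplex_eq; rewrite /= sact_mul sact_inv_r.
Qed.

Lemma chain_act d (K : porderType d) (S : symmetry K) (g : sgrp S) b p :
  chain b p -> chain (sact1 g b) (pact g p).
Proof. by elim: p b => [|c p IH] b //= [E H]; split; [rewrite E|exact: IH]. Qed.

Lemma is_path_act d (K : porderType d) (S : symmetry K) (g : sgrp S) p :
  is_path p -> is_path (pact g p).
Proof. by case: p => //= b p; exact: chain_act. Qed.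

Lemma wmove_act d (K : porderType d) (S : symmetry K) (g : sgrp S) x y :
  wmove x y -> wmove (pact g x) (pact g y).
Proof.
case=> [a|o a e Hea Hao Heo|b] /=.
- rewrite sact1_iota; exact: wm_iota.
- rewrite (sact1_edge _ (sact_mono g Hea)) (sact1_edge _ (sact_mono g Hao)).
  rewrite (sact1_edge _ (sact_mono g Heo)); exact: wm_comp.
- rewrite sact1_opp sact1_iota; exact: (wm_opp (sact1 g b)).
Qed.

Lemma weq_act d (K : porderType d) (S : symmetry K) (g : sgrp S) p q :
  wequiv p q -> wequiv (pact g p) (pact g q).
Proof.
elim=> {p q} [p q [Pp Pq [l1 [l2 [x [y [M [E1 E2]]]]]]]|p|p q _ IH|p q r _ IH1 _ IH2].
- apply: weq_step; split; [exact: is_path_act|exact: is_path_act|].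
  exists (pact g l1), (pact g l2), (pact g x), (pact g y); split; first exact: wmove_act.
  by rewrite E1 E2 /pact !map_cat.
- exact: weq_refl.
- exact: weq_sym.
- exact: weq_trans IH1 IH2.
Qed.

Lemma Lact_cls d (K : porderType d) (S : symmetry K) (g : sgrp S) (o : K) p (Hp : is_loop o p) :
  Lact g (cls Hp) = cls (loop_act g Hp).
Proof. apply: cls_eq; exact: weq_act (rep_cls Hp). Qed.

Lemma Llact_clsl d (K : porderType d) (S : symmetry K) (g : sgrp S) (o : K) p (Hp : is_loop o p)
  (Hs : supp_in p o) : Llact g (clsl Hp Hs) = clsl (loop_act g Hp) (supp_in_act g Hs).
Proof. apply: clsl_eq; exact: weq_act (rep_clsl Hp Hs). Qed.

Lemma loop_act_inv d (K : porderType d) (S : symmetry K) (g : sgrp S) (o : K) p :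
  is_loop (sact g o) p -> is_loop o (pact (sinv g) p).
Proof. by move=> Hp; have := loop_act (sinv g) Hp; rewrite sact_inv_l. Qed.

Lemma supp_act_inv d (K : porderType d) (S : symmetry K) (g : sgrp S) (o : K) p :
  supp_in p (sact g o) -> supp_in (pact (sinv g) p) o.
Proof. by move=> Hp; have := supp_in_act (sinv g) Hp; rewrite sact_inv_l. Qed.

Definition Lact_inv d (K : porderType d) (S : symmetry K) (g : sgrp S) (o : K)
  (y : Lam (sact g o)) : Lam o := cls (loop_act_inv (rep_loop y)).

Definition Llact_inv d (K : porderType d) (S : symmetry K) (g : sgrp S) (o : K)
  (y : Laml (sact g o)) : Laml o :=
  clsl (loop_act_inv (repl_loop y)) (supp_act_inv (proj2 (repl_spec y))).

Lemma Lact_inv_cls d (K : porderType d) (S : symmetry K) (g : sgrp S) (o : K) p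
  (Hp : is_loop (sact g o) p) : Lact_inv (cls Hp) = cls (loop_act_inv Hp).
Proof. apply: cls_eq; exact: weq_act (rep_cls Hp). Qed.

Lemma Llact_inv_clsl d (K : porderType d) (S : symmetry K) (g : sgrp S) (o : K) p
  (Hp : is_loop (sact g o) p) (Hs : supp_in p (sact g o)) :
  Llact_inv (clsl Hp Hs) = clsl (loop_act_inv Hp) (supp_act_inv Hs).
Proof. apply: clsl_eq; exact: weq_act (rep_clsl Hp Hs). Qed.

Lemma sval_rect d (K : porderType d) (u v : K) (e : u = v) (z : Lam u) :
  sval (eq_rect u (@Lam d K) z v e) = sval z.
Proof. by case: v / e. Qed.

Lemma svall_rect d (K : porderType d) (u v : K) (e : u = v) (z : Laml u) :
  sval (eq_rect u (@Laml d K) z v e) = sval z.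
Proof. by case: v / e. Qed.

Lemma pact_conjp d (K : porderType d) (S : symmetry K) (g : sgrp S) (o a : K)
  (H : a <= o) (H' : sact g a <= sact g o) p :
  pact g (conjp H p) = conjp H' (pact g p).
Proof. by rewrite !conjpE /pact !map_cat /= sact1_opp (sact1_edge _ H'). Qed.

Lemma Lam_cov d (K : porderType d) (S : symmetry K) :
  covariant (@Lmul d K) (@lam d K) (@Lact d K S).
Proof.
split.
- move=> g o; split.
  + elim/Lam_ind => p Hp; elim/Lam_ind => q Hq.
    rewrite (Lmul_cls Hp Hq) (Lact_cls g Hp) (Lact_cls g Hq) Lmul_cls Lact_cls.
    by apply: cls_eq; rewrite /pcat /pact map_cat; exact: weq_refl.
  + exists (@Lact_inv d K S g o).
    * elim/Lam_ind => p Hp; rewrite Lact_cls Lact_inv_cls; apply: cls_eq.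
      rewrite pact_inv_l; exact: weq_refl.
    * elim/Lam_ind => p Hp; rewrite Lact_inv_cls Lact_cls; apply: cls_eq.
      rewrite pact_inv_r; exact: weq_refl.
- move=> g h o e; elim/Lam_ind => p Hp.
  rewrite !Lact_cls; apply: Lam_ext; rewrite sval_rect /=; apply: weq_fun.
  rewrite pact_mul; exact: weq_refl.
- move=> g o a H H'; elim/Lam_ind => p Hp.
  rewrite lam_cls !Lact_cls lam_cls; apply: cls_eq; rewrite (pact_conjp _ H'); exact: weq_refl.
Qed.

Lemma Laml_cov d (K : porderType d) (S : symmetry K) :
  covariant (@Llmul d K) (@laml d K) (@Llact d K S).
Proof.
split.
- move=> g o; split.
  + elim/Laml_ind => p Hp Hs; elim/Laml_ind => q Hq Hs'.
    rewrite (Llmul_clsl Hp Hq) (Llact_clsl g Hp) (Llact_clsl g Hq) Llmul_clsl Llact_clsl.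
    by apply: clsl_eq; rewrite /pcat /pact map_cat; exact: weq_refl.
  + exists (@Llact_inv d K S g o).
    * elim/Laml_ind => p Hp Hs; rewrite Llact_clsl Llact_inv_clsl; apply: clsl_eq.
      rewrite pact_inv_l; exact: weq_refl.
    * elim/Laml_ind => p Hp Hs; rewrite Llact_inv_clsl Llact_clsl; apply: clsl_eq.
      rewrite pact_inv_r; exact: weq_refl.
- move=> g h o e; elim/Laml_ind => p Hp Hs.
  rewrite !Llact_clsl; apply: Laml_ext; rewrite svall_rect /=; apply: weq_fun.
  rewrite pact_mul; exact: weq_refl.
- move=> g o a H H'; elim/Laml_ind => p Hp Hs.
  rewrite laml_clsl !Llact_clsl laml_clsl; apply: clsl_eq; rewrite (pact_conjp _ H'); exact: weq_refl.
Qed.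

Lemma incl_cov d (K : porderType d) (S : symmetry K) :
  cov_morph (@Llact d K S) (@Lact d K S) (@incl d K).
Proof.
move=> g o; elim/Laml_ind => p Hp Hs.
by rewrite incl_clsl Lact_cls Llact_clsl incl_clsl.
Qed.

Theorem proposition3p4 (d : Order.disp_t) (K : porderType d)
    (HK : pathwise_connected K) :
  (* (i) *)
  ( (* the product, the maps lambda_ao computed on representatives: *)
    (forall (o : K) p q (Hp : is_loop o p) (Hq : is_loop o q),
        Lmul (cls Hp) (cls Hq) = cls (loop_cat Hp Hq)) /\
    (forall (o a : K) (H : o <= a) p (Hp : is_loop o p),
        lam H (cls Hp) = cls (loop_conjp H Hp)) /\
    (* (Lambda, lambda)_K is a net bundle of discrete groups *)
    is_net_bundle (@Lmul _ K) (@Lone _ K) (@Linv _ K) (@lam _ K) /\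
    (* (Lambda^l, lambda)_K is a net of discrete groups *)
    is_net (@Llmul _ K) (@Llone _ K) (@Llinv _ K) (@laml _ K) /\
    (* the inclusions i_o define a monomorphism *)
    net_mono (@Llmul _ K) (@Lmul _ K) (@laml _ K) (@lam _ K) (@incl _ K) ) /\
  (* (ii) *)
  (forall S : symmetry K,
    (forall (g : sgrp S) (o : K) p (Hp : is_loop o p),
        Lact g (cls Hp) = cls (loop_act g Hp)) /\
    covariant (@Lmul _ K) (@lam _ K) (@Lact _ K S) /\
    covariant (@Llmul _ K) (@laml _ K) (@Llact _ K S) /\
    net_mono (@Llmul _ K) (@Lmul _ K) (@laml _ K) (@lam _ K) (@incl _ K) /\
    cov_morph (@Llact _ K S) (@Lact _ K S) (@incl _ K)).
Proof.
split.
  split; first exact: Lmul_cls.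
  split; first exact: lam_cls.
  split; first exact: Lam_net.
  split; first exact: Laml_net.
  exact: incl_mono.
move=> S; split; first exact: Lact_cls.
split; first exact: Lam_cov.
split; first exact: Laml_cov.
split; first exact: incl_mono.
exact: incl_cov.
Qed.
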